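(* Let $G$ be an étale groupoid with base $T=G^{(0)}$, $T_0$ a totally disconnected $G$-space whose structure map $g\colon T_0\to T$ is proper with fibers of at most $N$ points, $T_n$ the $(n+1)$-fold fiber product of $T_0$ over $T$, and $g_n\colon T_n\to T$ the induced map. Let $F$ be a $G$-sheaf, $F^n=(g_n)_*(g_n^*F)$, and $F^{n,a}\subset F^n$ the alternating subsheaf. Then $F^{n,a}$ is c-soft.
   Context: All spaces are second countable locally compact Hausdorff. $T_n=\{(x_0,\dots,x_n)\in T_0^{n+1}:g(x_0)=\dots=g(x_n)\}$, $g_n(x_0,\dots,x_n)=g(x_0)$; $S_{n+1}$ acts on $T_n$ by permuting coordinates, hence on $F^n$ (using $\Gamma(U,F^n)=\Gamma(g_n^{-1}(U),g_n^*F)$). $T_n^f\subset T_n$ is the open set of points with pairwise distinct coordinates. For $U\subset T$ open, $\Gamma(U,F^{n,a})=\{x\in\Gamma(U,F^n): \operatorname{supp}x\subset T_n^f,\ s x=(-1)^{|s|}x\ \forall s\in S_{n+1}\}$. A sheaf is c-soft if every section over a compact subset extends to a global section. *)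

(* Defs.v *)
From mathcomp Require Import all_boot all_order all_algebra all_fingroup.
From mathcomp Require Import all_classical all_reals all_analysis.

Set Implicit Arguments.
Unset Strict Implicit.
Unset Printing Implicit Defensive.
Local Open Scope classical_set_scope.

Definition slch (X : topologicalType) : Prop :=
  [/\ hausdorff_space X, locally_compact [set: X] & @second_countable X].

(* local homeomorphism: continuous, and every point has an open
   neighbourhood on which f is injective and open (hence a homeomorphism
   onto an open subset) *)
Definition local_homeo (X Y : topologicalType) (f : X -> Y) : Prop :=
  continuous f /\
  forall a, exists U : set X,
    [/\ open U, U a,
        (forall x y, U x -> U y -> f x = f y -> x = y) &
        (forall V, open V -> V `<=` U -> open (f @` V))].

Definition proper_map (X Y : topologicalType) (f : X -> Y) : Prop :=
  continuous f /\ forall K : set Y, compact K -> compact (f @^-1` K).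

(* Etale groupoid with arrow space Gm and unit space T (identified with
   G^(0) through the unit map gu). gm a b is the product "a b", defined
   when gs a = gr b. *)
Record etale_groupoid (T Gm : topologicalType) := EtaleGroupoid {
  gs : Gm -> T; gr : Gm -> T; gu : T -> Gm; gi : Gm -> Gm;
  gm : Gm -> Gm -> Gm;
  gs_cont : continuous gs; gu_cont : continuous gu; gi_cont : continuous gi;
  gm_cont : {within [set ab : Gm * Gm | gs ab.1 = gr ab.2],
             continuous (fun ab => gm ab.1 ab.2)};
  gr_etale : local_homeo gr;
  gs_gu : forall t, gs (gu t) = t;
  gr_gu : forall t, gr (gu t) = t;
  gs_gm : forall a b, gs a = gr b -> gs (gm a b) = gs b;
  gr_gm : forall a b, gs a = gr b -> gr (gm a b) = gr a;
  gm_assoc : forall a b c, gs a = gr b -> gs b = gr c ->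
                gm (gm a b) c = gm a (gm b c);
  gm_unitl : forall a, gm (gu (gr a)) a = a;
  gm_unitr : forall a, gm a (gu (gs a)) = a;
  gs_gi : forall a, gs (gi a) = gr a;
  gr_gi : forall a, gr (gi a) = gs a;
  gm_invr : forall a, gm a (gi a) = gu (gr a);
  gm_invl : forall a, gm (gi a) a = gu (gs a)
}.

Definition is_Gspace (T Gm X : topologicalType) (G : etale_groupoid T Gm)
    (g : X -> T) (act : Gm -> X -> X) : Prop :=
  [/\ continuous g,
      {within [set ax : Gm * X | gs G ax.1 = g ax.2],
        continuous (fun ax => act ax.1 ax.2)},
      (forall a x, gs G a = g x -> g (act a x) = gr G a),
      (forall x, act (gu G (g x)) x = x) &
      (forall a b x, gs G a = gr G b -> gs G b = g x ->
         act (gm G a b) x = act a (act b x))].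

(* A sheaf of abelian groups on T, given by its etale space E with
   projection p (a local homeomorphism) and continuous fibrewise
   abelian group operations. *)
Record ab_sheaf (T : topologicalType) (E : topologicalType) := AbSheaf {
  sp : E -> T;
  sz : T -> E;
  sadd : E -> E -> E;
  sopp : E -> E;
  sp_etale : local_homeo sp;
  sz_cont : continuous sz;
  sadd_cont : {within [set ef : E * E | sp ef.1 = sp ef.2],
               continuous (fun ef => sadd ef.1 ef.2)};
  sopp_cont : continuous sopp;
  sp_sz : forall t, sp (sz t) = t;
  sp_sadd : forall e f, sp e = sp f -> sp (sadd e f) = sp e;
  sp_sopp : forall e, sp (sopp e) = sp e;
  saddA : forall e f h, sp e = sp f -> sp f = sp h ->
            sadd e (sadd f h) = sadd (sadd e f) h;
  saddC : forall e f, sp e = sp f -> sadd e f = sadd f e;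
  sadd0 : forall e, sadd e (sz (sp e)) = e;
  saddN : forall e, sadd e (sopp e) = sz (sp e)
}.

Definition is_Gsheaf (T Gm E : topologicalType) (G : etale_groupoid T Gm)
    (F : ab_sheaf T E) (actE : Gm -> E -> E) : Prop :=
  is_Gspace G (sp F) actE /\
  (forall a e f, gs G a = sp F e -> sp F e = sp F f ->
     actE a (sadd F e f) = sadd F (actE a e) (actE a f)).

Definition fibres_atmost (X T : Type) (g : X -> T) (N : nat) : Prop :=
  forall (t : T) (xs : 'I_N.+1 -> X), (forall i, g (xs i) = t) ->
    exists i j, i != j /\ xs i = xs j.

Section Fn.
Variables (T T0 E : topologicalType) (g : T0 -> T) (F : ab_sheaf T E) (n : nat).

Definition Pn : topologicalType := prod_topology (fun _ : 'I_n.+1 => T0).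

Definition Tn : set Pn := [set x | forall i j, g (x i) = g (x j)].

Definition Tnf : set Pn := [set x | Tn x /\ injective x].

Definition gn (x : Pn) : T := g (x ord0).

Definition Wn (U : set T) : set Pn := [set x | Tn x /\ U (gn x)].

(* Gamma(U, F^n) = Gamma(g_n^{-1}(U), g_n^* F): continuous maps
   s : g_n^{-1}(U) -> E with p o s = g_n (values off g_n^{-1}(U) are
   irrelevant) *)
Definition sec_Fn (U : set T) (s : Pn -> E) : Prop :=
  (forall x, Wn U x -> sp F (s x) = gn x) /\ {within Wn U, continuous s}.

Definition sec_Fna (U : set T) (s : Pn -> E) : Prop :=
  [/\ sec_Fn U s,
      (forall x, Wn U x -> s x <> sz F (gn x) -> Tnf x) &
      (forall (pi : 'S_n.+1) x, Wn U x ->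
         s (fun i => x (pi i)) = if odd_perm pi then sopp F (s x) else s x)].

Definition germ_eq (U1 U2 : set T) (t : T) (s1 s2 : Pn -> E) : Prop :=
  exists V : set T, [/\ open V, V t, V `<=` U1 `&` U2 &
                        forall x, Wn V x -> s1 x = s2 x].

(* A section of F^{n,a} over a compact K: a family of germs along K, given
   by local sections s t over open neighbourhoods U t of the points t of K
   whose germs agree at every common point of K. *)
Definition sec_Fna_on (K : set T) (U : T -> set T) (s : T -> Pn -> E) : Prop :=
  (forall t, K t -> [/\ open (U t), U t t & sec_Fna (U t) (s t)]) /\
  (forall t1 t2 t, K t1 -> K t2 -> K t -> U t1 t -> U t2 t ->
     germ_eq (U t1) (U t2) t (s t1) (s t2)).

(* c-softness of F^{n,a}: every section over a compact set is the
   restriction of a global section *)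
Definition Fna_csoft : Prop :=
  forall (K : set T) (U : T -> set T) (s : T -> Pn -> E),
    compact K -> sec_Fna_on K U s ->
    exists s0 : Pn -> E, sec_Fna setT s0 /\
      forall t1 t, K t1 -> K t -> U t1 t -> germ_eq setT (U t1) t s0 (s t1).

End Fn.

(* Main.v *)
Require Import Defs.
From mathcomp Require Import all_boot all_order all_algebra all_fingroup.
From mathcomp Require Import all_classical all_reals all_analysis.
Set Implicit Arguments.
Unset Strict Implicit.
Unset Printing Implicit Defensive.
Local Open Scope classical_set_scope.

Lemma dcover (T : topologicalType) (Z : set T) (S : set (set T)) :
  compact Z -> (forall N, S N -> open N) -> (exists N, S N) ->
  (forall N M, S N -> S M -> S (N `|` M)) ->
  (forall z, Z z -> exists2 N, S N & N z) -> exists2 N, S N & Z `<=` N.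
Proof.
move=> cZ oS [N0 SN0] SU cov.
apply: contrapT => nE.
have nZ : forall N, S N -> exists z, Z z /\ ~ N z.
  move=> N SN; apply: contrapT => h; apply: nE; exists N => // z Zz.
  by apply: contrapT => Nz; apply: h; exists z.
pose F := filter_from S (fun N => Z `\` N).
have FF : Filter F.
  apply: filter_from_filter; first by exists N0.
  move=> N M SN SM; exists (N `|` M); first exact: SU.
  by move=> z [Zz /not_orP [] ? ?].
have PF : ProperFilter F.
  apply: filter_from_proper => N SN; have [z [? ?]] := nZ N SN; by exists z.
have FZ : F Z by exists N0 => // z [].
have [z [Zz clz]] := cZ F PF FZ.
have [N SN Nz] := cov z Zz.
have := clz (Z `\` N) N; case.
- by exists N.
- by apply: open_nbhs_nbhs; split => //; exact: oS.
by move=> w [[_ ?] ?].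
Qed.

Section ZD.
Variable T : topologicalType.
Hypothesis hT : hausdorff_space T.

Lemma sep_pt (P : set T) y : compact P -> ~ P y ->
  exists U V : set T, [/\ open U, open V, P `<=` U, V y &
     forall z, U z -> V z -> False].
Proof.
move=> cP nPy.
have := @dcover T P [set N | open N /\ exists V, [/\ open V, V y &
   forall z, N z -> V z -> False]] cP.
case.
- by move=> N [].
- exists set0; split; first exact: open0.
  by exists setT; split => //; exact: openT.
- move=> N M [oN [V [oV Vy dV]]] [oM [V' [oV' V'y dV']]]; split; first exact: openU.
  exists (V `&` V'); split => //; first exact: openI.
  by move=> z [Nz|Mz] [? ?]; [exact: (dV z)|exact: (dV' z)].
- move=> z Pz; have zy : z != y by apply/eqP => zy; apply: nPy; rewrite -zy.
  have hT2 := hT; rewrite open_hausdorff in hT2.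
  have [[A B] /= [Az By] [oA oB AB0]] := hT2 z y zy.
  rewrite inE in Az; rewrite inE in By.
  have AB1 : A `&` B = set0 by apply/eqP.
  exists A => //; split => //; exists B; split => // w Aw Bw.
  by have : (A `&` B) w by []; rewrite AB1.
- move=> N [oN [V [oV Vy dV]]] PN; exists N, V; split => //.
Qed.

Lemma sep_cpt (P1 P2 : set T) : compact P1 -> compact P2 ->
  (forall z, P1 z -> P2 z -> False) ->
  exists U1 U2 : set T, [/\ open U1, open U2, P1 `<=` U1, P2 `<=` U2 &
     forall z, U1 z -> U2 z -> False].
Proof.
move=> cP1 cP2 d12.
have := @dcover T P1 [set N | open N /\ exists V, [/\ open V, P2 `<=` V &
   forall z, N z -> V z -> False]] cP1.
case.
- by move=> N [].
- exists set0; split; first exact: open0.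
  by exists setT; split => //; exact: openT.
- move=> N M [oN [V [oV Vy dV]]] [oM [V' [oV' V'y dV']]]; split; first exact: openU.
  exists (V `&` V'); split => //; first exact: openI.
    by move=> z P2z; split; [exact: Vy | exact: V'y].
  by move=> z [Nz|Mz] [? ?]; [exact: (dV z)|exact: (dV' z)].
- move=> z P1z; have nP2z : ~ P2 z by move=> ?; exact: (d12 z).
  have [U [V [oU oV P2U Vz dUV]]] := sep_pt cP2 nP2z.
  exists V => //; split => //; exists U; split => // w Vw Uw; exact: (dUV w).
- move=> N [oN [V [oV Vy dV]]] PN; exists N, V; split => //.
Qed.

Definition Ycl (Y D : set T) := [/\ D `<=` Y, closed D & closed (Y `\` D)].

Lemma YclI Y D1 D2 : Ycl Y D1 -> Ycl Y D2 -> Ycl Y (D1 `&` D2).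
Proof.
move=> [s1 c1 c1'] [s2 c2 c2']; split.
- by move=> z [/s1].
- exact: closedI.
- have -> : Y `\` (D1 `&` D2) = (Y `\` D1) `|` (Y `\` D2).
    apply/seteqP; split => z /=.
      by move=> [Yz /not_andP [] ?]; [left|right].
    by move=> [[Yz nD]|[Yz nD]]; split => // -[].
  exact: closedU.
Qed.

Lemma YclT Y : closed Y -> Ycl Y Y.
Proof.
move=> cY; split => //; rewrite setDv; exact: closed0.
Qed.

Lemma ycl_sep (Y Z : set T) x : compact Z -> closed Y -> Y x ->
  (forall z, Z z -> exists D, [/\ Ycl Y D, D x & ~ D z]) ->
  exists D, [/\ Ycl Y D, D x & forall z, Z z -> ~ D z].
Proof.
move=> cZ cY Yx H.
have := @dcover T Z [set N | exists D, [/\ Ycl Y D, D x & N = ~` D]] cZ.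
case.
- by move=> N [D [[_ cD _] _ ->]]; exact: closed_openC.
- by exists (~` Y), Y; split => //; exact: YclT.
- move=> N M [D [yD Dx ->]] [D' [yD' D'x ->]]; exists (D `&` D'); split.
  + exact: YclI.
  + by [].
  + by rewrite setCI.
- move=> z Zz; have [D [yD Dx nDz]] := H z Zz.
  by exists (~` D) => //; exists D.
- move=> N [D [yD Dx ->]] ZN; exists D; split => // z /ZN.
Qed.

Hypothesis lcT : locally_compact [set: T].
Hypothesis tdT : totally_disconnected [set: T].

Lemma zd (x : T) (W : set T) : open W -> W x ->
  exists C : set T, [/\ compact C, open C, closed C, C x & C `<=` W].
Proof.
move=> oW Wx.
have [Y nY [cY clY]] := lcT (I : [set: T] x).
rewrite withinET in nY.
pose O := interior Y `&` W.
have oO : open O by apply: openI => //; exact: open_interior.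
have Ox : O x by split.
have OY : O `<=` Y by move=> z [/interior_subset].
have Yx : Y x by exact: OY.
pose Qx := \bigcap_(D in [set D | Ycl Y D /\ D x]) D.
have QY : Qx `<=` Y by move=> z; apply; split => //; exact: YclT.
have Qxx : Qx x by move=> D [].
have clQ : closed Qx by apply: closed_bigI => D [[]].
have key : forall P1 P2 : set T, closed P1 -> closed P2 -> P1 `<=` Qx ->
   P2 `<=` Qx -> (forall z, Qx z -> P1 z \/ P2 z) ->
   (forall z, P1 z -> P2 z -> False) -> P1 x -> forall z, ~ P2 z.
  move=> P1 P2 c1 c2 s1 s2 cov d12 P1x z0 P2z0.
  have cP1 : compact P1 by apply: (subclosed_compact c1 cY) => z /s1 /QY.
  have cP2 : compact P2 by apply: (subclosed_compact c2 cY) => z /s2 /QY.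
  have [U1 [U2 [oU1 oU2 PU1 PU2 dU]]] := sep_cpt cP1 cP2 d12.
  pose Z := Y `&` ~` (U1 `|` U2).
  have cZ : compact Z.
    by apply: compact_closedI => //; apply: open_closedC; exact: openU.
  have [D0 [[D0Y cD0 cD0'] D0x D0Z]] : exists D, [/\ Ycl Y D, D x &
      forall z, Z z -> ~ D z].
    apply: ycl_sep => // z [Yz nU].
    have nQ : ~ Qx z.
      by move=> /cov [/PU1|/PU2] ?; apply: nU; [left|right].
    move: nQ => /existsNP [D] /not_implyP [[yD Dx] nDz].
    by exists D.
  pose D := D0 `&` ~` U2.
  have yD : Ycl Y D.
    split.
    - by move=> z [/D0Y].
    - by apply: closedI => //; exact: open_closedC.
    - have -> : Y `\` D = (Y `\` D0) `|` (D0 `&` ~` U1).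
        apply/seteqP; split => z /=.
          move=> [Yz /not_andP [nD|/contrapT U2z]]; first by left.
          case: (pselect (D0 z)) => D0z; last by left.
          by right; split => // U1z; exact: (dU z).
        move=> [[Yz nD]|[D0z nU1]]; first by split => // -[].
        split; first exact: D0Y.
        move=> [_ nU2]; apply: (D0Z z) => //; split; first exact: D0Y.
        by move=> [].
      apply: closedU => //; apply: closedI => //; exact: open_closedC.
  have Dx : D x.
    split => // U2x; exact: (dU x (PU1 _ P1x)).
  have : D z0 by apply: (s2 _ P2z0); split.
  by move=> [_]; apply; exact: PU2.
have conQ : connected Qx.
  move=> B [b Bb] [C1 oC1 BE1] [C2 cC2 BE2].
  have cB : closed B by rewrite BE2; exact: closedI.
  have cP : closed (Qx `&` ~` C1) by apply: closedI => //; exact: open_closedC.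
  case: (pselect (B x)) => Bx.
    have k := key B (Qx `&` ~` C1) cB cP.
    apply/seteqP; split; first by rewrite BE1 => z [].
    move=> z Qz; apply: contrapT => nBz.
    apply: (k _ _ _ _ Bx z).
    - by rewrite BE1 => w [].
    - by move=> w [].
    - move=> w Qw; case: (pselect (C1 w)) => C1w; last by right.
      by left; rewrite BE1.
    - by move=> w; rewrite BE1 => -[_ ?] [_].
    - split => // C1z; apply: nBz; by rewrite BE1.
  exfalso.
  have k := key (Qx `&` ~` C1) B cP cB.
  apply: (k _ _ _ _ _ b Bb).
  - by move=> w [].
  - by rewrite BE1 => w [].
  - move=> w Qw; case: (pselect (C1 w)) => C1w; last by left.
    by right; rewrite BE1.
  - by move=> w [_ ?]; rewrite BE1 => -[].
  - split => // C1x; apply: Bx; by rewrite BE1.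
have Q1 : Qx `<=` [set x].
  rewrite -(tdT (I : [set: T] x)).
  exact: connected_component_max.
pose Z := Y `&` ~` O.
have cZ : compact Z by apply: compact_closedI => //; exact: open_closedC.
have [D [[DY cD cD'] Dx DZ]] : exists D, [/\ Ycl Y D, D x &
      forall z, Z z -> ~ D z].
  apply: ycl_sep => // z [Yz nOz].
  have nQ : ~ Qx z by move=> /Q1 zx; apply: nOz; rewrite zx.
  move: nQ => /existsNP [D] /not_implyP [[yD Dx] nDz].
  by exists D.
have DO : D `<=` O.
  move=> z Dz; apply: contrapT => nOz; apply: (DZ z) => //; split => //.
  exact: DY.
exists D; split => //.
- exact: (subclosed_compact cD cY).
- have -> : D = O `&` ~` (Y `\` D).
    apply/seteqP; split => z.
      by move=> Dz; split; [exact: DO|move=> [_]].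
    move=> [Oz nYD]; apply: contrapT => nDz; apply: nYD; split => //.
    exact: OY.
  by apply: openI => //; exact: closed_openC.
- by move=> z /DO [].
Qed.

End ZD.

Section Cube.
Variables (T0 : topologicalType) (n : nat).

Lemma pcont (i : 'I_n.+1) : continuous (fun y : Pn T0 n => y i).
Proof. exact: (@proj_continuous _ (fun _ : 'I_n.+1 => T0) i). Qed.

Definition cube (C : set T0) : set (Pn T0 n) := [set y | forall i, C (y i)].

Lemma open_cube C : open C -> open (cube C).
Proof.
move=> oC; rewrite openE => y Cy.
rewrite /interior.
apply: (@filter_forall (Pn T0 n) 'I_n.+1 (fun i z => C (z i)) (nbhs y) _) => i.
have := @pcont i y; apply.
by apply: open_nbhs_nbhs; split.
Qed.

Lemma closed_cube C : closed C -> closed (cube C).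
Proof.
move=> cC.
have -> : cube C = \bigcap_(i in [set: 'I_n.+1]) ((fun y : Pn T0 n => y i) @^-1` C).
  by apply/seteqP; split => y /= h i; [move=> _; exact: h | exact: h].
apply: closed_bigI => i _; apply: closed_comp => //.
by move=> y _; exact: pcont.
Qed.

Lemma compact_cube C : compact C -> compact (cube C).
Proof.
move=> cC; exact: (@tychonoff _ (fun _ : 'I_n.+1 => T0) (fun _ => C)).
Qed.

Lemma closed_eqf (T : topologicalType) (f1 f2 : Pn T0 n -> T) :
  hausdorff_space T -> continuous f1 -> continuous f2 ->
  closed [set y | f1 y = f2 y].
Proof.
move=> hT c1 c2 y cly; apply: contrapT => ne.
have ne' : f1 y != f2 y by apply/eqP.
have hT2 := hT; rewrite open_hausdorff in hT2.
have [[A B] /= [Ay By] [oA oB AB0]] := hT2 _ _ ne'.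
rewrite inE in Ay; rewrite inE in By.
have AB1 : A `&` B = set0 by apply/eqP.
have nb : nbhs y (f1 @^-1` A `&` f2 @^-1` B).
  apply: filterI.
  - by apply: c1; apply: open_nbhs_nbhs; split.
  - by apply: c2; apply: open_nbhs_nbhs; split.
have [z [/= ez [Az Bz]]] := cly _ nb.
have : (A `&` B) (f1 z) by split => //; rewrite ez.
by rewrite AB1.
Qed.

End Cube.

Lemma open_agree (X : topologicalType) (I : eqType) (l : seq I) (A : I -> set X) (y : X) :
  (forall x, x \in l -> open (A x) /\ closed (A x)) ->
  open [set y' | forall x, x \in l -> (A x y' <-> A x y)].
Proof.
elim: l => [|a l IH] H.
  have -> : [set y' | forall x, x \in [::] -> (A x y' <-> A x y)] = setT.
    by apply/seteqP; split => // z _ x; rewrite in_nil.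
  exact: openT.
have [oa ca] := H a (mem_head a l).
have IH' : open [set y' | forall x, x \in l -> (A x y' <-> A x y)].
  by apply: IH => x xl; apply: H; rewrite inE xl orbT.
case: (pselect (A a y)) => Ay.
  have -> : [set y' | forall x, x \in a :: l -> (A x y' <-> A x y)] =
     A a `&` [set y' | forall x, x \in l -> (A x y' <-> A x y)].
    apply/seteqP; split => z /=.
      move=> h; split; first by apply/(h a (mem_head a l)).
      by move=> x xl; apply: h; rewrite inE xl orbT.
    move=> [Az h] x; rewrite inE => /orP [/eqP -> | xl]; last exact: h.
    by split.
  exact: openI.
have -> : [set y' | forall x, x \in a :: l -> (A x y' <-> A x y)] =
   ~` A a `&` [set y' | forall x, x \in l -> (A x y' <-> A x y)].
  apply/seteqP; split => z /=.
    move=> h; split; first by move=> /(h a (mem_head a l)).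
    by move=> x xl; apply: h; rewrite inE xl orbT.
  move=> [Az h] x; rewrite inE => /orP [/eqP -> | xl]; last exact: h.
  by split.
apply: openI => //; exact: closed_openC.
Qed.

Lemma nbhs_list (T : topologicalType) (I : eqType) (l : seq I)
  (P : I -> set T -> Prop) (t : T) :
  (forall i V V', V' `<=` V -> P i V -> P i V') ->
  (forall i, i \in l -> exists V, [/\ open V, V t & P i V]) ->
  exists V, [/\ open V, V t & forall i, i \in l -> P i V].
Proof.
move=> mono; elim: l => [|a l IH] H.
  exists setT; split => //; first exact: openT.
have [V [oV Vt PV]] := H a (mem_head a l).
have [V' [oV' V't PV']] : exists V, [/\ open V, V t & forall i, i \in l -> P i V].
  by apply: IH => x xl; apply: H; rewrite inE xl orbT.
exists (V `&` V'); split => //; first exact: openI.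
move=> i; rewrite inE => /orP [/eqP -> | il].
  by apply: mono PV => z [].
by apply: mono (PV' i il) => z [].
Qed.

Lemma sopp_sz (T E : topologicalType) (F : ab_sheaf T E) t :
  sopp F (sz F t) = sz F t.
Proof.
have h1 := saddN F (sz F t); rewrite sp_sz in h1.
have h2 := sadd0 F (sopp F (sz F t)); rewrite sp_sopp sp_sz in h2.
rewrite -{1}h2 saddC ?h1 //.
by rewrite sp_sopp.
Qed.

Lemma within_transfer (X Y : topologicalType) (A B : set X) (f h : X -> Y) y
  (O : set X) : nbhs y O -> (forall z, O z -> A z -> B z /\ f z = h z) ->
  h @ within B (nbhs y) --> h y -> f y = h y -> f @ within A (nbhs y) --> f y.
Proof.
move=> nO Oh hc fyh M; rewrite fyh => /hc.
rewrite /within /= !nbhs_simpl => nM.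
apply: filterS (filterI nO nM) => z [Oz Mz] Az.
have [Bz fz] := Oh z Oz Az; by rewrite /= fz; apply: Mz.
Qed.

Theorem proposition2p10
  (T Gm T0 E : topologicalType) (G : etale_groupoid T Gm)
  (g : T0 -> T) (act0 : Gm -> T0 -> T0) (N : nat)
  (F : ab_sheaf T E) (actE : Gm -> E -> E) (n : nat) :
  slch T -> slch Gm -> slch T0 ->
  is_Gspace G g act0 ->
  totally_disconnected [set: T0] ->
  proper_map g -> fibres_atmost g N ->
  is_Gsheaf G F actE ->
  Fna_csoft g F n.
Proof.
move=> [hT lcT _] _ [hT0 lcT0 _] _ td [cg pg] _ _; clear N.
rewrite /Fna_csoft => K U s cK [Hs Hg].
have zd0 := zd hT0 lcT0 td.
pose X := Pn T0 n.
have cgn : continuous (@gn T T0 g n).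
  by move=> y; apply: continuous_comp; [exact: pcont | exact: cg].
have clTn : closed (@Tn T T0 g n).
  have -> : @Tn T T0 g n = \bigcap_(ij in [set: 'I_n.+1 * 'I_n.+1])
      [set y : X | g (y ij.1) = g (y ij.2)].
    apply/seteqP; split => y /= h.
      by move=> [i j] _; exact: h.
    by move=> i j; exact: (h (i, j) I).
  apply: closed_bigI => -[i j] _; apply: closed_eqf => //.
  - by move=> y; apply: continuous_comp; [exact: pcont | exact: cg].
  - by move=> y; apply: continuous_comp; [exact: pcont | exact: cg].
have TnE : forall y : X, Tn g y -> forall i, g (y i) = gn g y.
  by move=> y Ty i; rewrite /gn (Ty i ord0).
pose Kn := @Tn T T0 g n `&` (@gn T T0 g n) @^-1` K.
have cKn : compact Kn.
  apply: (@subclosed_compact _ _ (cube (n:=n) (g @^-1` K))).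
  - apply: closedI => //; apply: (@closed_comp _ _ (@gn T T0 g n) K).
      by move=> y _; exact: cgn.
    exact: compact_closed.
  - by apply: compact_cube; exact: pg.
  - by move=> y [Ty Ky] i; rewrite /= TnE.
have fin : forall (l : seq T0) (W : set T0), open W -> (forall p, p \in l -> W p) ->
    exists C : set T0, [/\ compact C, open C, closed C,
       (forall p, p \in l -> C p) & C `<=` W].
  elim => [|a l IH] W oW Wl.
    exists set0; split => //; [exact: compact0 | exact: open0 | exact: closed0].
  have [C [cC oC clC Cl CW]] : exists C : set T0, [/\ compact C, open C, closed C,
       (forall p, p \in l -> C p) & C `<=` W].
    by apply: IH => // p pl; apply: Wl; rewrite inE pl orbT.
  have [D [cD oD clD Da DW]] := zd0 a W oW (Wl a (mem_head a l)).
  exists (D `|` C); split.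
  - exact: compactU.
  - exact: openU.
  - exact: closedU.
  - by move=> p; rewrite inE => /orP [/eqP -> | /Cl pl]; [left | right].
  - by move=> p [/DW | /CW].
have cubeC : forall x : X, exists C : set T0, Kn x -> [/\ compact C, open C, closed C,
     (forall i, C (x i)) & forall p, C p -> U (gn g x) (g p)].
  move=> x; case: (pselect (Kn x)) => Knx; last by exists set0.
  have [Tx Kx] := Knx.
  have [oU Ut _] := Hs _ Kx.
  have oW : open (g @^-1` U (gn g x)) by apply: open_comp => // p _; exact: cg.
  have [C [cC oC clC Cl CW]] := fin [seq x i | i <- enum 'I_n.+1] _ oW
     (fun p pl => ltac:(by case/mapP: pl => i _ ->; rewrite /= TnE)).
  exists C => _; split => // i; apply: Cl; apply/mapP; exists i => //.
  by rewrite mem_enum.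
have [Cf HCf] := choice cubeC.
have HC : forall x, Kn x -> [/\ compact (Cf x), open (Cf x), closed (Cf x),
     (forall i, Cf x (x i)) & forall p, Cf x p -> U (gn g x) (g p)] := HCf.
have [Ncov [l [lK NE]] Kcov] : exists2 N, [set N | exists l : seq X, (forall x, x \in l -> Kn x) /\
     N = \bigcup_(x in [set x | x \in l]) cube (n:=n) (Cf x)] N & Kn `<=` N.
  apply: dcover => //.
- move=> N [l [lK ->]]; apply: bigcup_open => x /lK /HC [_ oC _ _ _].
  exact: open_cube.
- by exists set0, [::]; split => //; apply/seteqP; split => // y [x].
- move=> N M [l1 [l1K ->]] [l2 [l2K ->]]; exists (l1 ++ l2); split.
    by move=> x; rewrite mem_cat => /orP [/l1K | /l2K].
  apply/seteqP; split => y.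
    by move=> [] [x xl cy]; exists x => //=; rewrite mem_cat xl ?orbT.
  move=> [x /=]; rewrite mem_cat => /orP [xl|xl] cy; [left|right]; by exists x.
- move=> z Kz; exists (\bigcup_(x in [set x | x \in [:: z]]) cube (n:=n) (Cf x)).
    by exists [:: z]; split => // x; rewrite inE => /eqP ->.
  exists z; first by rewrite /= inE.
  by have [_ _ _ ? _] := HC z Kz.
rewrite {}NE in Kcov.
pose pick (y : X) := ohead [seq x <- l | `[< cube (n:=n) (Cf x) y >]].
have pickS : forall y x, pick y = Some x -> x \in l /\ cube (Cf x) y.
  move=> y x; rewrite /pick; case HE: [seq _ <- l | _] => [|a r] //= [<-].
  have : a \in [seq x <- l | `[< cube (n:=n) (Cf x) y >]] by rewrite HE mem_head.
  by rewrite mem_filter => /andP [/asboolP ? ?].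
have pickN : forall y, pick y = None -> forall x, x \in l -> ~ cube (Cf x) y.
  move=> y; rewrite /pick; case HE: [seq _ <- l | _] => [|a r] //= _ x xl cy.
  have : x \in [seq x <- l | `[< cube (n:=n) (Cf x) y >]].
    by rewrite mem_filter xl andbT; apply/asboolP.
  by rewrite HE.
have pickE : forall y y', (forall x, x \in l -> (cube (Cf x) y' <-> cube (Cf x) y)) ->
    pick y' = pick y.
  move=> y y' h; rewrite /pick; congr ohead; apply: eq_in_filter => x xl.
  exact: asbool_equiv_eq (h x xl).
have pickO : forall y, exists2 O : set X, open O /\ O y & forall y', O y' -> pick y' = pick y.
  move=> y; exists [set y' | forall x, x \in l -> (cube (Cf x) y' <-> cube (Cf x) y)].
    split; last by move=> x _.
    apply: open_agree => x /lK /HC [_ oC clC _ _].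
    by split; [exact: open_cube | exact: closed_cube].
  by move=> y' h; exact: pickE.
pose s0 (y : X) := if pick y is Some x then s (gn g x) y else sz F (gn g y).
have inW : forall y x, pick y = Some x -> Tn g y ->
    [/\ x \in l, Kn x & Wn g (U (gn g x)) y].
  move=> y x /pickS [xl cy] Ty; have Knx := lK x xl; split => //; split => //.
  have [_ _ _ _ CU] := HC x Knx; exact: CU (cy ord0).
have cz : continuous (fun z : X => sz F (gn g z)).
  by move=> y; apply: continuous_comp; [exact: cgn | exact: sz_cont].
exists s0; split.
  split.
  - split.
    + move=> y [Ty _]; rewrite /s0; case HE: (pick y) => [x|]; last exact: sp_sz.
      have [xl Knx Wy] := inW y x HE Ty; have [_ _ [[sp_ _] _ _]] := Hs _ Knx.2.
      exact: sp_ Wy.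
    + apply/subspace_continuousP => y [Ty _].
      have [OO [oO Oy] Oc] := pickO y.
      case HE: (pick y) => [x|].
      * have [xl Knx Wy] := inW y x HE Ty.
        have [_ _ [[_ cs] _ _]] := Hs _ Knx.2.
        have [_ oC _ _ CU] := HC x Knx.
        apply: (@within_transfer _ _ _ (Wn g (U (gn g x))) _ (s (gn g x)) y
           (OO `&` cube (n:=n) (Cf x))).
        -- apply: filterI; apply: open_nbhs_nbhs; split => //; first exact: open_cube.
           by have [] := pickS y x HE.
        -- move=> z [Oz cz'] [Tz _]; split; first by split => //; exact: CU (cz' ord0).
           by rewrite /from_subspace /s0 (Oc z Oz) HE.
        -- by move/subspace_continuousP: cs; apply.
        -- by rewrite /from_subspace /s0 HE.
      * apply: (@within_transfer _ _ _ (Wn g setT) _ (fun z : X => sz F (gn g z)) y OO).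
        -- by apply: open_nbhs_nbhs; split.
        -- by move=> z Oz Wz; split => //; rewrite /from_subspace /s0 (Oc z Oz) HE.
        -- by have := @continuous_subspaceT _ _ (Wn g setT) _ cz;
             move/subspace_continuousP; apply.
        -- by rewrite /from_subspace /s0 HE.
  - move=> y [Ty _]; rewrite /s0; case HE: (pick y) => [x|]; last by [].
    have [xl Knx Wy] := inW y x HE Ty; have [_ _ [_ sup _]] := Hs _ Knx.2.
    exact: sup y Wy.
  - move=> pi y [Ty _].
    have pp : pick (fun i => y (pi i)) = pick y.
      apply: pickE => x _; split => h i.
        by have := h (pi^-1 i)%g; rewrite permKV.
      exact: h (pi i).
    rewrite /s0 pp; case HE: (pick y) => [x|].
      have [xl Knx Wy] := inW y x HE Ty; have [_ _ [_ _ alt]] := Hs _ Knx.2.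
      exact: alt pi y Wy.
    have -> : gn g (fun i => y (pi i)) = gn g y by rewrite /gn /= (Ty (pi ord0) ord0).
    by case: odd_perm; rewrite ?sopp_sz.
move=> t1 t Kt1 Kt Ut1t.
pose Acov := \bigcup_(x in [set x | x \in l]) cube (n:=n) (Cf x).
have oA : open Acov.
  apply: bigcup_open => x /lK /HC [_ oC _ _ _]; exact: open_cube.
have [V0 [oV0 V0t V0P]] : exists V0 : set T, [/\ open V0, V0 t &
    forall y : X, Tn g y -> V0 (gn g y) -> Acov y].
  have [Y nY [cY clY]] := lcT t I.
  rewrite withinET in nY.
  pose Q := (Tn g (n:=n) `&` gn g (n:=n) @^-1` Y) `&` ~` Acov.
  have cQ : compact Q.
    apply: (@subclosed_compact _ _ (cube (n:=n) (g @^-1` Y))).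
    - apply: closedI; last exact: open_closedC.
      apply: closedI => //; apply: (@closed_comp _ _ (@gn T T0 g n) Y) => //=.
    - by apply: compact_cube; exact: pg.
    - by move=> y [[Ty Yy] _] i; rewrite /= TnE.
  have cgQ : closed (@gn T T0 g n @` Q).
    apply: compact_closed => //; apply: continuous_compact => //.
    exact: continuous_subspaceT.
  exists (interior Y `&` ~` (@gn T T0 g n @` Q)); split.
  - apply: openI; [exact: open_interior | exact: closed_openC].
  - split => // -[y [[Ty Yy] nA] gy]; apply: nA; apply: Kcov; split => //.
    by rewrite /= gy.
  - move=> y Ty [iY nQ]; apply: contrapT => nA; apply: nQ; exists y => //.
    by split => //; split; [exact: Ty | exact: interior_subset iY].
have [Vl [oVl Vlt VlP]] : exists V, [/\ open V, V t & forall x, x \in l ->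
    forall y, Wn g V y -> cube (n:=n) (Cf x) y -> s (gn g x) y = s t1 y].
  apply: (@nbhs_list T _ l (fun x V => forall y, Wn g V y ->
    cube (n:=n) (Cf x) y -> s (gn g x) y = s t1 y) t).
    by move=> x V V' VV' h y Wy cy; apply: h cy; split; [exact: Wy.1 | exact: VV' _ Wy.2].
  move=> x xl.
  have Knx := lK x xl; have [cC oC clC _ CU] := HC x Knx.
  case: (pselect (exists y : X, [/\ Tn g y, cube (n:=n) (Cf x) y & gn g y = t])).
    move=> [y [Ty cy gy]]; have Uxt : U (gn g x) t by rewrite -gy; exact: CU (cy ord0).
    have [V [oV Vt VU eqV]] := Hg (gn g x) t1 t Knx.2 Kt1 Kt Uxt Ut1t.
    by exists V; split => // z Wz _; exact: eqV z Wz.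
  move=> nex; pose Qx := Tn g (n:=n) `&` cube (n:=n) (Cf x).
  have cQx : compact Qx.
    by rewrite /Qx setIC; apply: compact_closedI => //; exact: compact_cube.
  have cl : closed (@gn T T0 g n @` Qx).
    apply: compact_closed => //; apply: continuous_compact => //.
    exact: continuous_subspaceT.
  exists (~` (@gn T T0 g n @` Qx)); split.
  - exact: closed_openC.
  - by move=> [y [Ty cy] gy]; apply: nex; exists y.
  - by move=> y [Ty ny] cy; exfalso; apply: ny; exists y.
have [oU1 _ _] := Hs t1 Kt1.
exists (V0 `&` Vl `&` U t1); split.
- by apply: openI => //; apply: openI.
- by [].
- by move=> z [_ ?]; split.
move=> y [Ty [[V0y Vly] Uy]].
have [x xl cy] := V0P y Ty V0y.
rewrite /s0; case HE: (pick y) => [x'|]; last by exfalso; exact: pickN y HE x xl cy.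
have [x'l cy'] := pickS y x' HE.
exact: (VlP x' x'l y (conj Ty Vly) cy').
Qed.
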